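(* Let $f_1,\dots,f_n:\mathbb{R}^d\to\mathbb{R}$ satisfy Assumption A1 and let $F=(f_1,\dots,f_n)$. Then $R\le\sqrt{\kappa}\,r$, where $R:=\mathrm{diam}(\mathrm{Pareto}(F))=\sup\{\|x-x'\|_2:x,x'\in\mathrm{Pareto}(F)\}$.
   Context: Assumption A1: each $f_i$ is twice differentiable with $\mu\mathbf{I}\preceq\nabla^2 f_i(x)\preceq L\mathbf{I}$ for all $x$, $0<\mu\le L$; $\kappa:=L/\mu$; and $r:=\max_{i,j\in[n]}\|\operatorname{argmin} f_i-\operatorname{argmin} f_j\|_2$. A point $x$ is Pareto optimal if for all $x'$, $f_i(x')<f_i(x)$ for some $i$ implies $f_j(x')>f_j(x)$ for some $j$; $\mathrm{Pareto}(F)$ is the set of Pareto optimal points. *)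

(* Defs.v *)
From HB Require Import structures.
From mathcomp Require Import all_boot all_order all_algebra.
From mathcomp Require Import all_classical all_reals all_analysis.
Set Implicit Arguments. Unset Strict Implicit. Unset Printing Implicit Defensive.
Import Order.TTheory GRing.Theory Num.Theory.
Import numFieldNormedType.Exports.
Local Open Scope ring_scope.

Section Defs.
Variables (R : realType) (d : nat).

Definition dotv (u v : 'rV[R]_d) : R := \sum_(i < d) u 0 i * v 0 i.
Definition norm2 (u : 'rV[R]_d) : R := Num.sqrt (dotv u u).

Definition basisv (i : 'I_d) : 'rV[R]_d := \row_(j < d) (i == j)%:R.

Definition grad (f : 'rV[R]_d -> R) (x : 'rV[R]_d) : 'rV[R]_d :=
  \row_(i < d) ('d f x (basisv i)).

Definition A1_fun (mu L : R) (f : 'rV[R]_d -> R) : Prop :=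
  (forall x, differentiable f x) /\
  (forall x, differentiable (grad f) x) /\
  (forall x v, mu * dotv v v <= dotv ('d (grad f) x v) v /\
               dotv ('d (grad f) x v) v <= L * dotv v v).

Definition pareto_opt (n : nat) (F : 'I_n -> 'rV[R]_d -> R) (x : 'rV[R]_d) : Prop :=
  forall x', (exists i, F i x' < F i x) -> (exists j, F j x < F j x').

Definition is_argmin (f : 'rV[R]_d -> R) (z : 'rV[R]_d) : Prop :=
  forall x, f z <= f x.

End Defs.

(* Main.v *)
Require Import Defs.
From HB Require Import structures.
From mathcomp Require Import all_boot all_order all_algebra.
From mathcomp Require Import all_classical all_reals all_analysis.
From mathcomp Require Import ring lra.
Import Order.TTheory GRing.Theory Num.Theory.
Import numFieldNormedType.Exports.
Local Open Scope ring_scope.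

Module H1.
Set Implicit Arguments. Unset Strict Implicit.

Section Dot.
Variables (R : realType) (d : nat).
Implicit Types u v w : 'rV[R]_d.

Lemma dotvC u v : dotv u v = dotv v u.
Proof. by apply: eq_bigr => i _; rewrite mulrC. Qed.

Lemma dotvDl u v w : dotv (u + v) w = dotv u w + dotv v w.
Proof. by rewrite /dotv -big_split; apply: eq_bigr => i _; rewrite mxE mulrDl. Qed.

Lemma dotvZl a u v : dotv (a *: u) v = a * dotv u v.
Proof. by rewrite /dotv mulr_sumr; apply: eq_bigr => i _; rewrite mxE mulrA. Qed.

Lemma dotvNl u v : dotv (- u) v = - dotv u v.
Proof. by rewrite -scaleN1r dotvZl mulN1r. Qed.

Lemma dotvBl u v w : dotv (u - v) w = dotv u w - dotv v w.
Proof. by rewrite dotvDl dotvNl. Qed.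

Lemma dotvDr u v w : dotv w (u + v) = dotv w u + dotv w v.
Proof. by rewrite dotvC dotvDl !(dotvC w). Qed.

Lemma dotvZr a u v : dotv v (a *: u) = a * dotv v u.
Proof. by rewrite dotvC dotvZl dotvC. Qed.

Lemma dotvNr u v : dotv v (- u) = - dotv v u.
Proof. by rewrite dotvC dotvNl dotvC. Qed.

Lemma dotvBr u v w : dotv w (u - v) = dotv w u - dotv w v.
Proof. by rewrite dotvDr dotvNr. Qed.

Lemma dotv0l v : dotv 0 v = 0.
Proof. by rewrite /dotv big1 // => i _; rewrite mxE mul0r. Qed.

Lemma dotv0r v : dotv v 0 = 0.
Proof. by rewrite dotvC dotv0l. Qed.

Lemma dotv_suml n (F : 'I_n -> 'rV[R]_d) v :
  dotv (\sum_(i < n) F i) v = \sum_(i < n) dotv (F i) v.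
Proof.
elim/big_ind2: _ => [|a b c e Hab Hce|i _ //]; first exact: dotv0l.
by rewrite dotvDl Hab Hce.
Qed.

Lemma dotv_sumr n (F : 'I_n -> 'rV[R]_d) v :
  dotv v (\sum_(i < n) F i) = \sum_(i < n) dotv v (F i).
Proof. by rewrite dotvC dotv_suml; apply: eq_bigr => i _; rewrite dotvC. Qed.

Lemma dotv_ge0 u : 0 <= dotv u u.
Proof. by apply: sumr_ge0 => i _; rewrite -expr2 sqr_ge0. Qed.

Lemma dotv_eq0 u : dotv u u = 0 -> u = 0.
Proof.
move=> /eqP; rewrite psumr_eq0 => [/allP H|i _]; last by rewrite -expr2 sqr_ge0.
apply/rowP => i; rewrite mxE; have := H i (mem_index_enum _).
by rewrite /= mulf_eq0 orbb => /eqP.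
Qed.

End Dot.

End H1.
Import H1.
Module H2.

Section Calc.
Variables (R : realType) (d : nat).

Lemma line_derive (V : normedModType R) (F : 'rV[R]_d -> V) x v t df :
  is_derive (t *: v + x) v F df -> is_derive t 1 (fun s : R => F (s *: v + x)) df.
Proof.
move=> [dF vF].
have E : (fun h : R => h^-1 *: (((fun s : R => F (s *: v + x)) \o shift t) (h *: (1:R))
            - F (t *: v + x)))
       = (fun h : R => h^-1 *: ((F \o shift (t *: v + x)) (h *: v) - F (t *: v + x))).
  apply/funext => h /=.
  by rewrite /shift /= [_%:A]mulr1 scalerDl addrA.
split; first by rewrite /derivable E.
by rewrite /derive E.
Qed.

End Calc.

End H2.
Import H2.
Module H3.

Section Calc2.
Variables (R : realType) (d : nat).

Lemma row_decomp (v : 'rV[R]_d) : v = \sum_(i < d) v 0 i *: basisv R i.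
Proof.
apply/rowP => j; rewrite summxE (bigD1 j) //= big1 => [|i /negbTE ij].
  by rewrite !mxE eqxx mulr1 addr0.
by rewrite !mxE ij mulr0.
Qed.

Lemma dgrad (f : 'rV[R]_d -> R) a v :
  differentiable f a -> 'd f a v = dotv (grad f a) v.
Proof.
move=> df; rewrite {1}(row_decomp v) linear_sum /dotv; apply: eq_bigr => i _.
by rewrite linearZ /= mxE mulrC.
Qed.

Lemma diff_coord_val (M : 'rV[R]_d) i w :
  'd (fun N : 'rV[R]_d => N 0 i : R) M w = w 0 i.
Proof.
have @f : {linear 'rV[R]_d -> R}.
  by exists (fun N : 'M[R]_(_, _) => N 0 i); do 2![eexists]; do ?[constructor];
     rewrite ?mxE// => ? *; rewrite ?mxE//; move=> ?; rewrite !mxE.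
rewrite (_ : (fun _ => _) = f) // diff_lin //; exact: coord_continuous.
Qed.

Lemma is_derive_coord (G : 'rV[R]_d -> 'rV[R]_d) a u i :
  differentiable G a -> is_derive a u (fun b => G b 0 i) ('d G a u 0 i).
Proof.
move=> dG.
have dc : differentiable (fun b => G b 0 i) a.
  have -> : (fun b => G b 0 i) = (fun N : 'rV[R]_d => N 0 i) \o G by [].
  apply: differentiable_comp => //; exact: differentiable_coord.
split; first exact: diff_derivable.
rewrite deriveE //.
have -> : (fun b => G b 0 i) = (fun N : 'rV[R]_d => N 0 i) \o G by [].
rewrite diff_comp //; last exact: differentiable_coord.
by rewrite /= diff_coord_val.
Qed.

Lemma is_derive_dot (G : 'rV[R]_d -> 'rV[R]_d) a u w :
  differentiable G a -> is_derive a u (fun b => dotv (G b) w) (dotv ('d G a u) w).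
Proof.
move=> dG.
have -> : (fun b => dotv (G b) w) = \sum_(i < d) (w 0 i *: (fun b => G b 0 i)).
  rewrite fct_sumE; apply/funext => b; rewrite /dotv; apply: eq_bigr => i _.
  by rewrite /= mulrC.
rewrite /dotv.
have -> : \sum_(i < d) 'd G a u 0 i * w 0 i = \sum_(i < d) w 0 i *: 'd G a u 0 i.
  by apply: eq_bigr => i _; rewrite mulrC.
apply: is_derive_sum => i; apply: is_deriveZ; exact: is_derive_coord.
Qed.

End Calc2.

End H3.
Import H3.
Module H4.

Section Taylor.
Variable R : realType.

Lemma ndecr (h dh : R -> R) (a b : R) : (forall s : R, is_derive s 1 h (dh s)) ->
  (forall s, a <= s -> s <= b -> 0 <= dh s) -> a <= b -> h a <= h b.
Proof.
move=> Hd Hp ab.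
apply: (@ger0_derive1_ndecr R h a b) => //.
- move=> s; rewrite in_itv /= => /andP[a_s sb].
  rewrite derive1E derive_val; apply: Hp; exact: ltW.
- apply: derivable_within_continuous => s _; by [].
Qed.

Lemma is_derive_lin (φ ψ : R -> R) (c k s : R) :
  is_derive s 1 φ (ψ s) -> is_derive s 1 (fun t => φ t - c * t - k * (t * t))
    (ψ s - c - k * (2 * s)).
Proof.
move=> H.
have h1 : is_derive s 1 (c \*: (@id R)) (c *: 1) := is_deriveZ c (is_derive_id s 1).
have h0 : is_derive s 1 ((@id R) * (@id R)) (s *: 1 + s *: 1) :=
  is_deriveM (is_derive_id s 1) (is_derive_id s 1).
have h2 := is_deriveZ k h0.
have := is_deriveB (is_deriveB H h1) h2.
have -> : (φ - c \*: id - k \*: (id * id)) = (fun t => φ t - c * t - k * (t * t)).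
  by apply/funext => t.
move=> HH; apply: (is_derive_eq HH).
rewrite /= ![_%:A]mulr1 /GRing.scale /=; ring.
Qed.

Lemma taylor_lb (g φ ψ : R -> R) (m : R) :
  (forall s : R, is_derive s 1 g (φ s)) -> (forall s : R, is_derive s 1 φ (ψ s)) ->
  (forall s, 0 <= s -> s <= 1 -> m <= ψ s) -> m / 2 <= g 1 - g 0 - φ 0.
Proof.
move=> Hg Hφ Hψ.
have A s : 0 <= s -> s <= 1 -> φ 0 + m * s <= φ s.
  move=> s0 s1.
  have := @ndecr (fun t => φ t - m * t - 0 * (t * t))
    (fun t => ψ t - m - 0 * (2 * t)) 0 s (fun t => @is_derive_lin φ ψ m 0 t (Hφ t)).
  rewrite !mul0r !subr0 mulr0 subr0 => H.
  have := H _ s0; rewrite -lerBrDr; apply => t t0 ts.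
  rewrite mul0r subr0 subr_ge0; apply: Hψ => //; exact: (le_trans ts).
have := @ndecr (fun t => g t - φ 0 * t - (m / 2) * (t * t))
    (fun t => φ t - φ 0 - (m / 2) * (2 * t)) 0 1 (fun t => @is_derive_lin g φ (φ 0) (m / 2) t (Hg t)).
rewrite !mulr0 !subr0 !mulr1 => H2.
have : g 0 <= g 1 - φ 0 - m / 2.
  apply: H2 => // t t0 t1.
  have := A t t0 t1.
  have -> : m / 2 * (2 * t) = m * t by field.
  lra.
lra.
Qed.

Lemma taylor_ub (g φ ψ : R -> R) (M : R) :
  (forall s : R, is_derive s 1 g (φ s)) -> (forall s : R, is_derive s 1 φ (ψ s)) ->
  (forall s, 0 <= s -> s <= 1 -> ψ s <= M) -> g 1 - g 0 - φ 0 <= M / 2.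
Proof.
move=> Hg Hφ Hψ.
have Ng (s : R) : is_derive s 1 (fun t => - g t) (- φ s).
  have -> : (fun t => - g t) = - g by apply/funext.
  exact: is_deriveN.
have Nφ (s : R) : is_derive s 1 (fun t => - φ t) (- ψ s).
  have -> : (fun t => - φ t) = - φ by apply/funext.
  exact: is_deriveN.
have := @taylor_lb _ _ _ (- M) Ng Nφ.
have H : forall s, 0 <= s -> s <= 1 -> - M <= - ψ s.
  by move=> s s0 s1; rewrite lerN2 Hψ.
move=> /(_ H); lra.
Qed.

End Taylor.

End H4.
Import H4.
Module H5.

Section SWsec.
Variables (R : realType) (d : nat).

Lemma SW (f : 'rV[R]_d -> R) mu L : A1_fun mu L f -> forall x v,
  mu / 2 * dotv v v <= f (v + x) - f x - dotv (grad f x) v /\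
  f (v + x) - f x - dotv (grad f x) v <= L / 2 * dotv v v.
Proof.
move=> [df [dg Hb]] x v.
pose g := fun s : R => f (s *: v + x).
pose φ := fun s : R => dotv (grad f (s *: v + x)) v.
pose ψ := fun s : R => dotv ('d (grad f) (s *: v + x) v) v.
have Hg (s : R) : is_derive s 1 g (φ s).
  apply: line_derive; split; first exact: diff_derivable.
  by rewrite deriveE // dgrad.
have Hφ (s : R) : is_derive s 1 φ (ψ s).
  apply: (@line_derive _ _ _ (fun b => dotv (grad f b) v)).
  exact: is_derive_dot.
have E1 : g 1 = f (v + x) by rewrite /g scale1r.
have E0 : g 0 = f x by rewrite /g scale0r add0r.
have F0 : φ 0 = dotv (grad f x) v by rewrite /φ scale0r add0r.
split.
- have := @taylor_lb _ g φ ψ (mu * dotv v v) Hg Hφ.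
  rewrite E1 E0 F0 mulrAC; apply => s _ _; exact: (Hb _ v).1.
- have := @taylor_ub _ g φ ψ (L * dotv v v) Hg Hφ.
  rewrite E1 E0 F0 mulrAC; apply => s _ _; exact: (Hb _ v).2.
Qed.

End SWsec.

End H5.
Import H5.
Module H6.
Set Implicit Arguments. Unset Strict Implicit.

Section Disk.
Variables (R : realType) (d : nat).
Implicit Types u v w g : 'rV[R]_d.

Lemma dot2 a b g v :
  dotv (a *: g + b *: v) (a *: g + b *: v) =
  a ^+ 2 * dotv g g + 2 * a * b * dotv g v + b ^+ 2 * dotv v v.
Proof.
rewrite !dotvDl !dotvDr !dotvZl !dotvZr (dotvC v g); ring.
Qed.

Lemma dot1 a b g v : dotv g (a *: g + b *: v) = a * dotv g g + b * dotv g v.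
Proof. by rewrite dotvDr !dotvZr. Qed.

Definition SW2 mu L (f : 'rV[R]_d -> R) (gf : 'rV[R]_d -> 'rV[R]_d) :=
  forall a b, mu / 2 * dotv (b - a) (b - a) <= f b - f a - dotv (gf a) (b - a) /\
              f b - f a - dotv (gf a) (b - a) <= L / 2 * dotv (b - a) (b - a).

Variables (mu L : R) (f : 'rV[R]_d -> R) (gf : 'rV[R]_d -> 'rV[R]_d).
Hypothesis mu0 : 0 < mu.
Hypothesis muL : mu <= L.
Hypothesis sw : SW2 mu L f gf.

Lemma grad_min z : (forall x, f z <= f x) -> gf z = 0.
Proof.
move=> zmin; apply: dotv_eq0.
have L0 : 0 < L by exact: (lt_le_trans mu0 muL).
set G := dotv (gf z) (gf z).
have := (sw z ((- L^-1) *: gf z + z)).2.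
rewrite addrK dotvZl dotvZr.
have := zmin ((- L^-1) *: gf z + z).
rewrite -/G => H1 H2.
have G0 : 0 <= G by exact: dotv_ge0.
have : G / (2 * L) <= 0.
  have E : L / 2 * (- L^-1 * (- L^-1 * G)) = G / (2 * L) * 1.
    field; rewrite gt_eqF //.
  have E2 : - L^-1 * G = - (G / (2 * L)) * 2 by field; rewrite gt_eqF.
  lra.
move=> H; apply/eqP; rewrite eq_le G0 andbT.
have -> : G = G / (2 * L) * (2 * L) by field; rewrite gt_eqF.
by apply: mulr_le0_ge0 => //; apply: mulr_ge0 => //; apply: ltW.
Qed.

Lemma disk_key z x t : (forall y, f z <= f y) ->
  0 <= (dotv (gf x) (x - z) - mu * dotv (x - z) (x - z))
   - 2 * t * (dotv (gf x) (gf x) - 2 * mu * dotv (gf x) (x - z) + mu ^+ 2 * dotv (x - z) (x - z))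
   + (L - mu) * t ^+ 2 * (dotv (gf x) (gf x) - 2 * mu * dotv (gf x) (x - z) + mu ^+ 2 * dotv (x - z) (x - z)).
Proof.
move=> zmin; have g0 := grad_min zmin.
set g := gf x; set v := x - z.
set p1 := x - t *: (g - mu *: v).
set p2 := z + t *: (g - mu *: v).
have E1 : p1 - x = (- t) *: g + (t * mu) *: v.
  by apply/rowP => i; rewrite /p1 /v !mxE; ring.
have E2 : p1 - z = (- t) *: g + (1 + t * mu) *: v.
  by apply/rowP => i; rewrite /p1 /v !mxE; ring.
have E3 : p2 - x = t *: g + (- (t * mu) - 1) *: v.
  by apply/rowP => i; rewrite /p2 /v !mxE; ring.
have E4 : p2 - z = t *: g + (- (t * mu)) *: v.
  by apply/rowP => i; rewrite /p2 /v !mxE; ring.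
have c1 := (sw x p1).2; have c2 := (sw z p1).1.
have d1 := (sw x p2).1; have d2 := (sw z p2).2.
rewrite -/g E1 dot2 dot1 in c1.
rewrite -/g E3 dot2 dot1 in d1.
rewrite g0 dotv0l E2 dot2 in c2.
rewrite g0 dotv0l E4 dot2 in d2.
nra.
Qed.

Lemma disk z x : (forall y, f z <= f y) ->
  dotv (gf x) (gf x) + mu * L * dotv (x - z) (x - z) <= (L + mu) * dotv (gf x) (x - z).
Proof.
move=> zmin.
have K t := disk_key x t zmin.
set Gg := dotv (gf x) (gf x) in K *; set Gv := dotv (gf x) (x - z) in K *.
set V := dotv (x - z) (x - z) in K *.
set H := Gg - 2 * mu * Gv + mu ^+ 2 * V in K.
suff : H <= (L - mu) * (Gv - mu * V) by rewrite /H; nra.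
have [Lmu|Lmu] := eqVneq L mu.
  rewrite Lmu subrr mul0r.
  rewrite leNgt; apply/negP => H0.
  have := K ((Gv - mu * V + 1) / (2 * H)).
  rewrite Lmu subrr !mul0r addr0.
  have -> : 2 * ((Gv - mu * V + 1) / (2 * H)) * H = Gv - mu * V + 1.
    by field; rewrite gt_eqF.
  lra.
have l0 : 0 < L - mu by rewrite subr_gt0 lt_def Lmu muL.
have ln0 : L - mu != 0 by rewrite gt_eqF.
have := K (L - mu)^-1.
have -> : (L - mu) * (L - mu)^-1 ^+ 2 * H = H / (L - mu) by field.
have -> : 2 * (L - mu)^-1 * H = 2 * (H / (L - mu)) by ring.
move=> HH.
have : H / (L - mu) <= Gv - mu * V by lra.
by rewrite ler_pdivrMr // mulrC.
Qed.

End Disk.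

End H6.
Import H6.
Module H7.
Set Implicit Arguments. Unset Strict Implicit.

Section ParetoG.
Variables (R : realType) (d n : nat).
Variables (mu L : R) (F : 'I_n -> 'rV[R]_d -> R) (gf : 'I_n -> 'rV[R]_d -> 'rV[R]_d).
Hypothesis mu0 : 0 < mu.
Hypothesis muL : mu <= L.
Hypothesis sw : forall i, SW2 mu L (F i) (gf i).

Lemma pareto_G (i0 : 'I_n) x : pareto_opt F x ->
  forall dd, exists i, 0 <= dotv (gf i x) dd.
Proof.
move=> Px dd; apply/not_existsP => Hn.
have neg i : dotv (gf i x) dd < 0 by rewrite ltNge; apply/negP => /(Hn i).
pose c i := - dotv (gf i x) dd.
have cpos i : 0 < c i by rewrite /c oppr_gt0.
case: (@arg_minP _ R _ i0 xpredT c isT) => j _ jmin.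
set N := dotv dd dd.
have L0 : 0 < L by exact: (lt_le_trans mu0 muL).
have N0 : 0 < N.
  rewrite lt_def dotv_ge0 andbT; apply/negP => /eqP /dotv_eq0 dd0.
  by have := neg i0; rewrite dd0 dotv0r ltxx.
pose t := c j / (L * N).
have t0 : 0 < t by rewrite /t divr_gt0 // mulr_gt0.
have dec i : F i (t *: dd + x) < F i x.
  have := (sw i x (t *: dd + x)).2.
  rewrite addrK dotvZr dotvZl dotvZr -/N.
  have ci : c j <= c i by exact: jmin.
  have E : dotv (gf i x) dd = - c i by rewrite /c opprK.
  rewrite E.
  have E2 : L / 2 * (t * (t * N)) = t * (c j / 2).
    by rewrite /t; field; rewrite ?gt_eqF.
  rewrite E2 => H.
  have : t * (c j / 2) < t * c i.
    rewrite ltr_pM2l //; have := cpos j; lra.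
  nra.
have [k Hk] := Px (t *: dd + x) (ex_intro _ i0 (dec i0)).
by have := dec k; rewrite ltNge (ltW Hk).
Qed.

End ParetoG.

End H7.
Import H7.
Module H8.
Set Implicit Arguments. Unset Strict Implicit.
Local Open Scope classical_set_scope.

Section Gordan.
Variables (R : realType) (d n : nat) (g : 'I_n -> 'rV[R]_d).

Definition Pw (w : 'rV[R]_n) : 'rV[R]_d := \sum_(i < n) w 0 i *: g i.

Lemma Pw_coord w k : Pw w 0 k = \sum_(i < n) w 0 i * g i 0 k.
Proof. by rewrite /Pw summxE; apply: eq_bigr => i _; rewrite mxE. Qed.

Lemma Phi_cont : continuous (fun w => dotv (Pw w) (Pw w)).
Proof.
pose h k := \sum_(i < n) (g i 0 k) *: (fun w : 'rV[R]_n => w 0 i).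
have E : (fun w => dotv (Pw w) (Pw w)) = \sum_(k < d) (h k * h k).
  apply/funext => w; rewrite /dotv fct_sumE; apply: eq_bigr => k _.
  rewrite /= /h fct_sumE Pw_coord; congr (_ * _); apply: eq_bigr => i _;
    by rewrite /= mulrC.
rewrite E => w; apply: differentiable_continuous.
apply: differentiable_sum => k; apply: differentiableM;
  apply: differentiable_sum => i; apply: differentiableZ;
  exact: differentiable_coord.
Qed.

Definition simplex := [set w : 'rV[R]_n | (forall i, 0 <= w 0 i) /\ \sum_(i < n) w 0 i = 1].

Lemma simplex_le1 w i : simplex w -> w 0 i <= 1.
Proof.
move=> [w0 w1]; rewrite -w1 (bigD1 i) //= lerDl.
by apply: sumr_ge0 => j _.
Qed.

Lemma basis_simplex i : simplex (basisv R i).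
Proof.
split=> [j|]; first by rewrite mxE ler0n.
rewrite (bigD1 i) //= big1 => [|j /negbTE ji]; first by rewrite mxE eqxx addr0.
by rewrite mxE eq_sym ji.
Qed.

Lemma simplex_closed : closed simplex.
Proof.
have -> : simplex = (\bigcap_(i in setT) [set w : 'rV[R]_n | 0 <= w 0 i])
    `&` ((fun w : 'rV[R]_n => \sum_(i < n) w 0 i) @^-1` [set x | x = 1]).
  apply/seteqP; split => w /=.
    by move=> [w0 w1]; split => // i _; exact: w0.
  by move=> [w0 w1]; split => // i; exact: w0.
apply: closedI.
  apply: closed_bigI => i _.
  have -> : [set w : 'rV[R]_n | 0 <= w 0 i] = (fun w : 'rV[R]_n => w 0 i) @^-1` [set x | 0 <= x] by [].
  apply: preimage_closed; last exact: closed_ge.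
  move=> w _; exact: coord_continuous.
apply: preimage_closed; last exact: closed_eq.
move=> w _; apply: differentiable_continuous.
have -> : (fun w : 'rV[R]_n => \sum_(i < n) w 0 i) = \sum_(i < n) (fun w : 'rV[R]_n => w 0 i).
  by rewrite fct_sumE.
apply: differentiable_sum => i; exact: differentiable_coord.
Qed.

Lemma simplex_compact : compact simplex.
Proof.
apply: (@subclosed_compact _ _ [set v : 'rV[R]_n | forall i, `[0, 1]%classic (v ord0 i)]).
- exact: simplex_closed.
- apply: (@rV_compact R n (fun=> `[0, 1]%classic)) => i; exact: segment_compact.
- move=> w Sw i /=; rewrite in_itv /=; apply/andP; split.
    exact: Sw.1.
  exact: simplex_le1.
Qed.

Lemma Pw_comb (w : 'rV[R]_n) t i :
  Pw ((1 - t) *: w + t *: basisv R i) = (1 - t) *: Pw w + t *: g i.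
Proof.
apply/rowP => k; rewrite Pw_coord !mxE Pw_coord.
rewrite (eq_bigr (fun j => (1 - t) * (w 0 j * g j 0 k) + t * ((i == j)%:R * g j 0 k))); last first.
  by move=> j _; rewrite !mxE; ring.
rewrite big_split /= -!mulr_sumr; congr (_ + _ * _).
rewrite (bigD1 i) //= big1 => [|j ji]; first by rewrite eqxx mul1r addr0.
by rewrite eq_sym (negbTE ji) mul0r.
Qed.

Lemma gordan (i0 : 'I_n) : (forall dd, exists i, 0 <= dotv (g i) dd) ->
  exists w : 'rV[R]_n, (forall i, 0 <= w 0 i) /\ \sum_(i < n) w 0 i = 1 /\ Pw w = 0.
Proof.
move=> HG.
have S0 : simplex !=set0 by exists (basisv R i0); exact: basis_simplex.
have cPhi : {within simplex, continuous (fun w => dotv (Pw w) (Pw w))}.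
  by apply: continuous_subspaceT; exact: Phi_cont.
have [w Sw wmin] := EVT_min_rV S0 simplex_compact cPhi.
rewrite inE in Sw; case: (Sw) => w0 w1.
exists w; split => //; split => //.
apply: dotv_eq0; set p := Pw w; set P := dotv p p.
have P0 : 0 <= P by exact: dotv_ge0.
apply/eqP; rewrite eq_le P0 andbT leNgt; apply/negP => Ppos.
have [i Hi] := HG (- p).
rewrite dotvNr oppr_ge0 dotvC in Hi.
set G := dotv (g i) (g i).
have G0 : 0 <= G by exact: dotv_ge0.
pose t := P / (P + G).
have PG : 0 < P + G by lra.
have t0 : 0 < t by rewrite /t divr_gt0.
have t1 : t <= 1 by rewrite /t ler_pdivrMr // mul1r lerDl.
have tPG : t * (P + G) = P by rewrite /t divfK // gt_eqF.
have St : simplex ((1 - t) *: w + t *: basisv R i).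
  split=> [j|].
    rewrite !mxE; apply: addr_ge0; apply: mulr_ge0; rewrite ?ler0n ?w0 //; lra.
  rewrite (eq_bigr (fun j => (1 - t) * w 0 j + t * (basisv R i) 0 j)); last first.
    by move=> j _; rewrite !mxE.
  rewrite big_split /= -!mulr_sumr w1 (basis_simplex i).2; ring.
have := wmin _ (mem_set St).
rewrite Pw_comb -/p dot2 -/P -/G.
have h1 : 0 <= t * (1 - t) by apply: mulr_ge0; lra.
have h2 : t * (1 - t) * dotv p (g i) <= 0 by apply: mulr_ge0_le0.
have h3 : t ^+ 2 * (P + G) = t * P by rewrite expr2 -mulrA tPG.
have h4 : 0 < t * P by apply: mulr_gt0.
nra.
Qed.

End Gordan.

End H8.
Import H8.
Module H9.
Set Implicit Arguments. Unset Strict Implicit.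

Section Final.
Variables (R : realType) (d n : nat).
Implicit Types (w : 'I_n -> R) (a : 'I_n -> 'rV[R]_d).

Definition wm w a : 'rV[R]_d := \sum_(i < n) w i *: a i.

Lemma dotv_wm_l w a y : dotv (wm w a) y = \sum_(i < n) w i * dotv (a i) y.
Proof. by rewrite /wm dotv_suml; apply: eq_bigr => i _; rewrite dotvZl. Qed.

Lemma dotv_wm_r w a y : dotv y (wm w a) = \sum_(i < n) w i * dotv y (a i).
Proof. by rewrite dotvC dotv_wm_l; apply: eq_bigr => i _; rewrite dotvC. Qed.

Lemma var_id w a y : \sum_(i < n) w i = 1 ->
  \sum_(i < n) w i * dotv (y - a i) (y - a i) =
  dotv (y - wm w a) (y - wm w a) + (\sum_(i < n) w i * dotv (a i) (a i) - dotv (wm w a) (wm w a)).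
Proof.
move=> w1.
have E i : w i * dotv (y - a i) (y - a i) =
    w i * dotv y y - 2 * (w i * dotv y (a i)) + w i * dotv (a i) (a i).
  rewrite !dotvBl !dotvBr (dotvC (a i) y); ring.
rewrite (eq_bigr _ (fun i _ => E i)) !big_split /= -mulr_suml w1 mul1r sumrN -mulr_sumr.
rewrite -dotv_wm_r !dotvBl !dotvBr (dotvC (wm w a) y); ring.
Qed.

Lemma jensen w a : (forall i, 0 <= w i) -> \sum_(i < n) w i = 1 ->
  dotv (wm w a) (wm w a) <= \sum_(i < n) w i * dotv (a i) (a i).
Proof.
move=> w0 w1; have := var_id a (wm w a) w1.
rewrite subrr dotv0l add0r => E; rewrite -subr_ge0 -E.
by apply: sumr_ge0 => i _; apply: mulr_ge0 => //; exact: dotv_ge0.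
Qed.

Lemma wm_sub w a x : \sum_(i < n) w i = 1 ->
  wm w (fun i => x - a i) = x - wm w a.
Proof.
move=> w1; apply/rowP => k; rewrite /wm !mxE !summxE.
rewrite (eq_bigr (fun i => w i * x 0 k - w i * a i 0 k)); last by move=> i _; rewrite !mxE; ring.
by rewrite sumrB -mulr_suml w1 mul1r; congr (_ - _); apply: eq_bigr => i _; rewrite !mxE.
Qed.

Lemma wm_lin w a b c : wm w (fun i => a i - c *: b i) = wm w a - c *: wm w b.
Proof.
apply/rowP => k; rewrite /wm !mxE !summxE mulr_sumr -sumrB.
by apply: eq_bigr => i _; rewrite !mxE; ring.
Qed.

Lemma center_bound mu L w (X g : 'I_n -> 'rV[R]_d) x :
  0 < mu -> mu <= L -> (forall i, 0 <= w i) -> \sum_(i < n) w i = 1 ->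
  wm w g = 0 ->
  (forall i, dotv (g i) (g i) + mu * L * dotv (x - X i) (x - X i)
              <= (L + mu) * dotv (g i) (x - X i)) ->
  4 * mu * L * dotv (x - wm w X) (x - wm w X) <=
    (L - mu) ^+ 2 * (\sum_(i < n) w i * dotv (X i) (X i) - dotv (wm w X) (wm w X)).
Proof.
move=> mu0 muL w0 w1 wg disk.
set c := (L + mu) / 2.
pose s i := g i - c *: (x - X i).
have ws : wm w s = - c *: (x - wm w X).
  by rewrite /s wm_lin wm_sub // wg sub0r scaleNr.
have si i : dotv (s i) (s i) <= ((L - mu) / 2) ^+ 2 * dotv (x - X i) (x - X i).
  have := disk i; rewrite /s; move: (x - X i) => v.
  rewrite !dotvBl !dotvBr !dotvZl !dotvZr (dotvC v (g i)) /c.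
  move: (dotv (g i) (g i)) (dotv (g i) v) (dotv v v) => Gg Gv V.
  nra.
have J := jensen s w0 w1.
have J2 : \sum_(i < n) w i * dotv (s i) (s i) <=
          ((L - mu) / 2) ^+ 2 * \sum_(i < n) w i * dotv (x - X i) (x - X i).
  rewrite mulr_sumr; apply: ler_sum => i _.
  by rewrite mulrCA; apply: ler_wpM2l => //; exact: si.
rewrite (var_id X x w1) in J2.
rewrite ws dotvZl dotvZr in J.
set E := dotv (x - wm w X) (x - wm w X) in J J2 *.
set S := _ - dotv (wm w X) (wm w X) in J2 *.
have E0 : 0 <= E by exact: dotv_ge0.
have := le_trans J J2; rewrite /c => H.
nra.
Qed.

Lemma dotv_symB (u v : 'rV[R]_d) : dotv (u - v) (u - v) = dotv (v - u) (v - u).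
Proof. by rewrite -opprB dotvNl dotvNr opprK. Qed.

Lemma cross_id w w' (X : 'I_n -> 'rV[R]_d) :
  \sum_(i < n) w i = 1 -> \sum_(i < n) w' i = 1 ->
  \sum_(i < n) w i * \sum_(j < n) w' j * dotv (X i - X j) (X i - X j) =
  dotv (wm w X - wm w' X) (wm w X - wm w' X)
  + (\sum_(i < n) w i * dotv (X i) (X i) - dotv (wm w X) (wm w X))
  + (\sum_(i < n) w' i * dotv (X i) (X i) - dotv (wm w' X) (wm w' X)).
Proof.
move=> w1 w1'.
rewrite (eq_bigr (fun i => w i * dotv (wm w' X - X i) (wm w' X - X i) +
   w i * (\sum_(j < n) w' j * dotv (X j) (X j) - dotv (wm w' X) (wm w' X)))); last first.
  by move=> i _; rewrite (var_id X (X i) w1') dotv_symB mulrDr.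
rewrite big_split /= (var_id X (wm w' X) w1) -mulr_suml w1 mul1r dotv_symB; ring.
Qed.

Lemma cross_bound w w' (X : 'I_n -> 'rV[R]_d) r2 :
  (forall i, 0 <= w i) -> (forall i, 0 <= w' i) ->
  \sum_(i < n) w i = 1 -> \sum_(i < n) w' i = 1 ->
  (forall i j, dotv (X i - X j) (X i - X j) <= r2) ->
  \sum_(i < n) w i * \sum_(j < n) w' j * dotv (X i - X j) (X i - X j) <= r2.
Proof.
move=> w0 w0' w1 w1' Hr.
have H : \sum_(i < n) w i * \sum_(j < n) w' j * dotv (X i - X j) (X i - X j) <=
       \sum_(i < n) w i * \sum_(j < n) w' j * r2.
  apply: ler_sum => i _; apply: ler_wpM2l => //; apply: ler_sum => j _.
  by apply: ler_wpM2l.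
apply: (le_trans H); rewrite (eq_bigr (fun i => w i * r2)).
  by rewrite -mulr_suml w1 mul1r.
by move=> i _; rewrite -mulr_suml w1' mul1r.
Qed.

Lemma paral (u v : 'rV[R]_d) : dotv (u - v) (u - v) <= 2 * dotv u u + 2 * dotv v v.
Proof.
have := dotv_ge0 (u + v).
rewrite !dotvDl !dotvDr !dotvNl !dotvNr (dotvC v u); lra.
Qed.

Lemma cs_like (a c : R) (u v : 'rV[R]_d) :
  2 * a * c * dotv u v <= a ^+ 2 * dotv u u + c ^+ 2 * dotv v v.
Proof.
have := dotv_ge0 (a *: u + (- c) *: v).
rewrite dot2; nra.
Qed.

Lemma pair_bound mu L w w' (X : 'I_n -> 'rV[R]_d) x x' r2 :
  0 < mu -> mu <= L ->
  (forall i, 0 <= w i) -> (forall i, 0 <= w' i) ->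
  \sum_(i < n) w i = 1 -> \sum_(i < n) w' i = 1 ->
  (forall i j, dotv (X i - X j) (X i - X j) <= r2) ->
  4 * mu * L * dotv (x - wm w X) (x - wm w X) <=
    (L - mu) ^+ 2 * (\sum_(i < n) w i * dotv (X i) (X i) - dotv (wm w X) (wm w X)) ->
  4 * mu * L * dotv (x' - wm w' X) (x' - wm w' X) <=
    (L - mu) ^+ 2 * (\sum_(i < n) w' i * dotv (X i) (X i) - dotv (wm w' X) (wm w' X)) ->
  mu * dotv (x - x') (x - x') <= L * r2.
Proof.
move=> mu0 muL w0 w0' w1 w1' Hr He He'.
have Hc := cross_bound w0 w0' w1 w1' Hr.
rewrite (cross_id X w1 w1') in Hc.
set xb := wm w X in He Hc *; set xb' := wm w' X in He' Hc *.
set S := (_ - dotv xb xb) in He Hc; set S' := (_ - dotv xb' xb') in He' Hc.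
set e := x - xb in He; set e' := x' - xb' in He'.
set dl := xb - xb' in Hc.
have Eu : x - x' = 1 *: dl + 1 *: (e - e').
  by apply/rowP => k; rewrite /dl /e /e' !mxE; ring.
rewrite Eu dot2.
set b := e - e'.
set A := dotv dl dl in Hc *; set B := dotv dl b; set C := dotv b b.
set E := dotv e e in He; set E' := dotv e' e' in He'.
have E0 : 0 <= E by exact: dotv_ge0.
have E0' : 0 <= E' by exact: dotv_ge0.
have A0 : 0 <= A by exact: dotv_ge0.
have C0 : 0 <= C by exact: dotv_ge0.
have S0 : 0 <= S.
  have := jensen X w0 w1; rewrite /S -/xb; lra.
have S0' : 0 <= S'.
  have := jensen X w0' w1'; rewrite /S' -/xb'; lra.
have HC : C <= 2 * E + 2 * E'.
  exact: paral.
have HB : 2 * (L - mu) * mu * B <= (L - mu) ^+ 2 * A + mu ^+ 2 * C.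
  have := cs_like (L - mu) mu dl b; rewrite -/A -/B -/C; lra.
have [Lmu|Lmu] := eqVneq L mu.
  have z : (L - mu) ^+ 2 = 0 by rewrite Lmu subrr expr0n.
  rewrite z mul0r in He; rewrite z mul0r in He'.
  have ml : 0 < 4 * mu * L by rewrite Lmu; apply: mulr_gt0 => //; apply: mulr_gt0.
  have EE : E = 0.
    apply/eqP; rewrite eq_le E0 andbT; move: He; rewrite pmulr_rle0 //.
  have EE' : E' = 0.
    apply/eqP; rewrite eq_le E0' andbT; move: He'; rewrite pmulr_rle0 //.
  have C00 : C = 0 by lra.
  have b0 : b = 0 by apply: dotv_eq0.
  have B0 : B = 0 by rewrite /B b0 dotv0r.
  rewrite B0 C00 -Lmu; nra.
have l0 : 0 < L - mu by rewrite subr_gt0 lt_def Lmu muL.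
suff : (L - mu) * (mu * (1 ^+ 2 * A + 2 * 1 * 1 * B + 1 ^+ 2 * C)) <= (L - mu) * (L * r2).
  by rewrite ler_pM2l.
have L0 : 0 < L by exact: (lt_le_trans mu0 muL).
have h1 : mu * L * C <= mu * L * (2 * E + 2 * E').
  by apply: ler_wpM2l => //; apply: mulr_ge0; apply: ltW.
have h2 : (L - mu) ^+ 2 * (S + S') <= 2 * L * (L - mu) * (S + S').
  have hp : 0 <= (L - mu) * (S + S') * (L + mu).
    by apply: mulr_ge0; [apply: mulr_ge0|]; lra.
  nra.
have h3 : L * (L - mu) * (A + S + S') <= L * (L - mu) * r2.
  by apply: ler_wpM2l; [apply: mulr_ge0; lra | lra].
rewrite expr1n !mul1r mulr1.
nra.
Qed.

End Final.

End H9.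
Import H9.
Module H10.
Set Implicit Arguments. Unset Strict Implicit.

Lemma SW_SW2 (R : realType) (d : nat) (f : 'rV[R]_d -> R) mu L :
  A1_fun mu L f -> SW2 mu L f (grad f).
Proof.
move=> HA a b; have := @SW R d f mu L HA a (b - a); by rewrite subrK.
Qed.

Lemma weights_exist (R : realType) (d n : nat) (F : 'I_n -> 'rV[R]_d -> R)
    (mu L : R) (xstar : 'I_n -> 'rV[R]_d) (i0 : 'I_n) x :
  0 < mu -> mu <= L ->
  (forall i, A1_fun mu L (F i)) ->
  (forall i, is_argmin (F i) (xstar i)) -> pareto_opt F x ->
  exists w : 'I_n -> R, [/\ (forall i, 0 <= w i), \sum_(i < n) w i = 1 &
  4 * mu * L * dotv (x - wm w xstar) (x - wm w xstar) <=
    (L - mu) ^+ 2 * (\sum_(i < n) w i * dotv (xstar i) (xstar i)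
                     - dotv (wm w xstar) (wm w xstar))].
Proof.
move=> mu0 muL HA Hmin Px.
have sw i := SW_SW2 (HA i).
have HG := pareto_G mu0 muL sw i0 Px.
have [w [w0 [w1 wP]]] := gordan i0 HG.
exists (fun i => w 0 i); split => //.
apply: (@center_bound R d n mu L (fun i => w 0 i) xstar (fun i => grad (F i) x)) => //.
move=> i; exact: (disk mu0 muL (sw i) x (Hmin i)).
Qed.


End H10.
Import H10.



Theorem lemma1 (R : realType) (d n : nat) (F : 'I_n -> 'rV[R]_d -> R)
    (mu L : R) (xstar : 'I_n -> 'rV[R]_d) :
  (0 < n)%N -> 0 < mu -> mu <= L ->
  (forall i, A1_fun mu L (F i)) ->
  (forall i, is_argmin (F i) (xstar i)) ->
  let r := \big[Num.max/0]_(i < n) \big[Num.max/0]_(j < n)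
             norm2 (xstar i - xstar j) in
  forall x x', pareto_opt F x -> pareto_opt F x' ->
    norm2 (x - x') <= Num.sqrt (L / mu) * r.
Proof.
move=> n0 mu0 muL HA Hmin r x x' Px Px'.
pose i0 : 'I_n := Ordinal n0.
have [w [w0 w1 He]] := weights_exist i0 mu0 muL HA Hmin Px.
have [w' [w0' w1' He']] := weights_exist i0 mu0 muL HA Hmin Px'.
have r0 : 0 <= r by apply: bigmax_ge_id.
have Hr i j : dotv (xstar i - xstar j) (xstar i - xstar j) <= r ^+ 2.
  have h : norm2 (xstar i - xstar j) <= r.
    apply: (le_trans _ (le_bigmax _ _ i)).
    exact: (le_bigmax _ (fun j => norm2 (xstar i - xstar j)) j).
  rewrite -(sqr_sqrtr (dotv_ge0 (xstar i - xstar j))).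
  by rewrite ler_pXn2r // ?nnegrE ?sqrtr_ge0.
have := pair_bound mu0 muL w0 w0' w1 w1' Hr He He'.
move=> H.
have D0 := dotv_ge0 (x - x').
rewrite /norm2 -(ger0_norm r0) -sqrtr_sqr -sqrtrM; last first.
  have L0 : 0 < L by exact: (lt_le_trans mu0 muL).
  by apply: divr_ge0; apply: ltW.
apply: ler_wsqrtr.
rewrite mulrAC ler_pdivlMr //.
by rewrite mulrC.
Qed.
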